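(* Let $V$ be a finite node set and let $x=(x_{u,v})$ be a real vector indexed by ordered pairs $(u,v)$ of distinct nodes of $V$ satisfying $0\le x_{u,v}\le 1$ for all such pairs and $\sum_{u\in V\setminus\{v\}}x_{u,v}\le 1$ for every $v\in V$. Let $\mathcal{W}$ be a finite nonempty set of directed walks that all end in the same node $t$, such that for any two distinct walks $W\neq W'\in\mathcal{W}$ there is a node $v$ with $|\delta^-_W(v)\cup\delta^-_{W'}(v)|\ge 2$. Then $$\sum_{W\in\mathcal{W}}x(W)\le\Big(\sum_{W\in\mathcal{W}}\ell_W\Big)-|\mathcal{W}|+1.$$
   Context: A directed walk is a sequence $W=v_0,a_1,v_1,\dots,a_k,v_k$ with arcs $a_i=(v_{i-1},v_i)$, $v_{i-1}\neq v_i$; it may repeat nodes and arcs. Its length $\ell_W=k$ is the number of arcs counted with multiplicity, and $x(W)=\sum_{i=1}^k x_{a_i}$ (with multiplicity). For a node $v$, $\delta^-_W(v)$ denotes the set of arcs of $W$ entering $v$ (i.e. the set of $a_i$ with head $v_i=v$). *)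

(* Defs.v *)
From mathcomp Require Import all_boot all_order all_algebra.
Set Implicit Arguments. Unset Strict Implicit. Unset Printing Implicit Defensive.
Import Order.TTheory GRing.Theory Num.Theory.

(* A directed walk v_0, a_1, v_1, ..., a_k, v_k is encoded by its nonempty
   node sequence [:: v_0; ...; v_k]; arcs are a_i = (v_{i-1}, v_i) and must
   join distinct nodes. *)
Definition is_walk (V : eqType) (W : seq V) : bool :=
  if W is h :: s then path (fun u v => u != v) h s else false.

Definition arcs (V : Type) (W : seq V) : seq (V * V) := zip W (behead W).

Definition wlen (V : Type) (W : seq V) : nat := size (arcs W).

Definition ends_in (V : eqType) (W : seq V) (t : V) : bool :=
  if W is h :: s then last h s == t else false.

Definition xW (R : numDomainType) (V : Type) (x : V -> V -> R) (W : seq V) : R :=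
  (\sum_(a <- arcs W) x a.1 a.2)%R.

Definition in_arcs (V : finType) (W : seq V) (v : V) : {set V * V} :=
  [set a : V * V | (a \in arcs W) && (a.2 == v)].

(* Main.v *)
Require Import Defs.
From mathcomp Require Import all_boot all_order all_algebra.
From mathcomp Require Import ring lra zify.
Import Order.TTheory GRing.Theory Num.Theory.

Section Aux.
Variables (R : realFieldType) (V : finType) (x : V -> V -> R).
Hypothesis hx0 : forall u v : V, u != v -> (0 <= x u v)%R.
Hypothesis hx1 : forall u v : V, u != v -> (x u v <= 1)%R.
Local Open Scope ring_scope.

Lemma path_arcs (T : eqType) (e : rel T) h s :
  path e h s -> forall a, a \in zip (h :: s) s -> e a.1 a.2.
Proof.
elim: s h => [|y s IH] h //= /andP[ehy p] a.
rewrite in_cons => /orP[/eqP-> //|]; exact: IH.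
Qed.

Lemma walk_arcs (W : seq V) : is_walk W -> forall a, a \in arcs W -> a.1 != a.2.
Proof. by case: W => [|h s] //= p a; rewrite /arcs /=; apply: path_arcs p a. Qed.

Lemma sum_undup (T : eqType) (s : seq T) (f : T -> R) :
  (forall a, a \in s -> 0 <= f a) ->
  \sum_(a <- undup s) f a <= \sum_(a <- s) f a.
Proof.
elim: s => [|y s IH] H /=; first by rewrite !big_nil.
have H' : forall a, a \in s -> 0 <= f a.
  by move=> a ais; apply: H; rewrite in_cons ais orbT.
rewrite big_cons; case: ifP => ys.
- apply: le_trans (IH H') _; rewrite lerDr; apply: H; exact: mem_head.
- by rewrite big_cons lerD2l; exact: IH.
Qed.

Lemma def_eq (s : seq (V * V)) :
  (size s)%:R - \sum_(a <- s) x a.1 a.2 = \sum_(a <- s) (1 - x a.1 a.2).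
Proof.
elim: s => [|a s IH]; first by rewrite !big_nil subr0.
rewrite !big_cons -IH /= mulrS; ring.
Qed.

Lemma walk_def (W : seq V) : is_walk W ->
  \sum_v \sum_(a in in_arcs W v) (1 - x a.1 a.2) <= (wlen W)%:R - xW x W.
Proof.
move=> hw.
rewrite /wlen /xW def_eq.
have -> : \sum_v \sum_(a in in_arcs W v) (1 - x a.1 a.2) =
          \sum_(a in [set a | a \in arcs W]) (1 - x a.1 a.2).
  rewrite [RHS](partition_big snd xpredT) //=.
  apply: eq_bigr => v _; apply: eq_bigl => a.
  by rewrite /in_arcs !inE.
have -> : \sum_(a in [set a | a \in arcs W]) (1 - x a.1 a.2) =
          \sum_(a <- undup (arcs W)) (1 - x a.1 a.2).
  rewrite big_uniq ?undup_uniq //; apply: eq_bigl => a.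
  by rewrite inE mem_undup.
apply: sum_undup => a /(@walk_arcs W hw) ne.
by rewrite subr_ge0; apply: hx1.
Qed.

End Aux.
Section Node.
Variables (R : realFieldType) (V : finType) (x : V -> V -> R).
Hypothesis hx0 : forall u v : V, u != v -> (0 <= x u v)%R.
Hypothesis hx1 : forall u v : V, u != v -> (x u v <= 1)%R.
Variable v : V.
Hypothesis hxin : (\sum_(u | u != v) x u v <= 1)%R.
Variables (n : nat) (S : 'I_n -> {set V * V}).
Hypothesis hS : forall i a, a \in S i -> (a.2 == v) && (a.1 != v).
Local Open Scope ring_scope.

Definition Hv := [set b : V * V | (b.2 == v) && (b.1 != v)].

Lemma K : \sum_(b in Hv) x b.1 b.2 <= 1.
Proof.
have -> : \sum_(b in Hv) x b.1 b.2 = \sum_(u | u != v) x u v.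
  rewrite big_mkcond /=.
  transitivity (\sum_(p : V * V)
     (fun u w => if (w == v) && (u != v) then x u w else 0) p.1 p.2).
    by apply: eq_bigr => -[u w] _; rewrite inE.
  rewrite -(pair_bigA _ (fun u w => if (w == v) && (u != v) then x u w else 0)) /= [RHS]big_mkcond /=; apply: eq_bigr => u _.
  rewrite (bigD1 v) //= eqxx /= big1 ?addr0 // => w /negbTE ->.
  by [].
exact: hxin.
Qed.


Lemma subH (A : {set V * V}) : A \subset Hv -> \sum_(b in A) x b.1 b.2 <= 1.
Proof.
move=> sA; apply: le_trans K.
rewrite [X in _ <= X](big_setID A) /= (setIidPr sA) lerDl sumr_ge0 // => b.
rewrite !inE => /andP[_ /andP[/eqP e ne]]; rewrite e; exact: hx0.
Qed.

Definition cnt b := #|[set i | S i == [set b]]|.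
Definition astar := [arg max_(a > (v, v)) cnt a].
Lemma astar_max b : (cnt b <= cnt astar)%N.
Proof. rewrite /astar; case: arg_maxnP => // a _ H; exact: H. Qed.

Definition C := [set i | S i \subset [set astar]].

Lemma count_R (P : pred 'I_n) : \sum_i ((P i)%:R : R) = (#|[set i | P i]|)%:R.
Proof.
transitivity (\sum_(i | P i) (1 : R)).
  by rewrite [RHS]big_mkcond; apply: eq_bigr => i _; case: (P i).
by rewrite sumr_const cardsE.
Qed.

Definition sg i := \sum_b (if S i == [set b] then x b.1 b.2 else 0).
Definition h i := \sum_(a in S i) (1 - x a.1 a.2).

Lemma set1_neq0 (b : V * V) : (set0 == [set b]) = false.
Proof. apply/negbTE/eqP => e; have := set11 b; by rewrite -e inE. Qed.

Lemma per_i i : (i \notin C)%:R + (S i == [set astar])%:R - sg i <= h i.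
Proof.
have [c0|[c1|c2]] : (#|S i| = 0 \/ #|S i| = 1 \/ 2 <= #|S i|)%N by lia.
- have E := cards0_eq c0.
  rewrite /h /sg E big_set0 big1 => [|b _]; last by rewrite set1_neq0.
  by rewrite /C inE E sub0set set1_neq0 /= subr0 addr0.
- have /cards1P [b E] : #|S i| == 1%N by rewrite c1.
  rewrite /h /sg E big_set1 (bigD1 b) //= eqxx big1 => [|b' nb]; last first.
    by rewrite (inj_eq set1_inj) eq_sym (negbTE nb).
  rewrite addr0 /C inE E sub1set inE (inj_eq set1_inj).
  by case: (b == astar) => /=; rewrite ?add0r ?addr0 lexx.
- have nsing : forall b, (S i == [set b]) = false.
    by move=> b; apply/negbTE/eqP => e; rewrite e cards1 in c2.
  rewrite /sg big1 => [|b _]; last by rewrite nsing.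
  rewrite nsing /C inE.
  have -> : (S i \subset [set astar]) = false.
    apply/negbTE/negP => sub; have := subset_leq_card sub; rewrite cards1; lia.
  rewrite /h sumrB sumr_const.
  have hs : \sum_(a in S i) x a.1 a.2 <= 1.
    by apply: subH; apply/subsetP => a /hS; rewrite inE.
  have hc : (2 : R) <= (#|S i|)%:R by rewrite (ler_nat R 2).
  rewrite /= -[(1 : R) *+ #|S i|]/((#|S i|)%:R). lra.
Qed.

Lemma node_bound : (#|~: C|)%:R <= \sum_i h i.
Proof.
apply: le_trans (ler_sum _ (fun i _ => per_i i)).
rewrite sumrB big_split /= !count_R.
have -> : [set i | i \notin C] = ~: C by apply/setP => i; rewrite !inE.
have -> : #|[set i | S i == [set astar]]| = cnt astar by [].
suff : \sum_i sg i <= (cnt astar)%:R by lra.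
rewrite /sg exchange_big /=.
have -> : \sum_b \sum_i (if S i == [set b] then x b.1 b.2 else 0) =
          \sum_b x b.1 b.2 *+ cnt b.
  apply: eq_bigr => b _; rewrite -big_mkcond /= sumr_const /cnt cardsE //.
rewrite (bigID (mem Hv)) /= [X in _ + X]big1 ?addr0 => [|b hb]; last first.
  suff -> : cnt b = 0%N by rewrite mulr0n.
  apply/eqP; rewrite cards_eq0; apply/eqP/setP => i; rewrite !inE.
  apply/negbTE/eqP => e; have := hS i b; rewrite e set11 => /(_ isT).
  by move: hb; rewrite inE => /negbTE ->.
apply: le_trans (_ : \sum_(b in Hv) x b.1 b.2 *+ cnt astar <= _).
  apply: ler_sum => b; rewrite inE => /andP[/eqP e ne].
  apply: ler_wpMn2l; last exact: astar_max.
  rewrite e; exact: hx0.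
rewrite sumrMnl; exact: ler_wMn2r K.
Qed.

End Node.

Lemma cover_bound (V : finType) n (Cs : V -> {set 'I_n}) :
  (0 < n)%N ->
  (forall i j, i != j -> exists v, (i \notin Cs v) || (j \notin Cs v)) ->
  (n <= \sum_v #|~: Cs v| + 1)%N.
Proof.
move=> hn hc.
set D := \bigcup_v ~: Cs v.
have hD : (#|D| <= \sum_v #|~: Cs v|)%N.
  rewrite /D; elim/big_rec2: _ => [|v m U _ le]; first by rewrite cards0.
  rewrite cardsU; lia.
have hC : (#|~: D| <= 1)%N.
  rewrite leqNgt; apply/negP => /card_gt1P [i [j [hi hj nij]]].
  have [v /orP hv] := hc i j nij.
  move: hi hj; rewrite !inE => /bigcupP hi /bigcupP hj.
  case: hv => hv; [apply: hi | apply: hj]; exists v => //; by rewrite inE.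
have := cardsC D; rewrite card_ord; lia.
Qed.

Theorem lemma1 (R : realFieldType) (V : finType) (x : V -> V -> R)
  (t : V) (Ws : seq (seq V))
  (hx01 : forall u v : V, u != v -> (0 <= x u v)%R /\ (x u v <= 1)%R)
  (hxin : forall v : V, (\sum_(u | u != v) x u v <= 1)%R)
  (hWs_uniq : uniq Ws) (hWs_ne : Ws != [::])
  (hwalk : forall W, W \in Ws -> is_walk W)
  (hend : forall W, W \in Ws -> ends_in W t)
  (hsep : forall W W', W \in Ws -> W' \in Ws -> W != W' ->
            exists v : V, 2 <= #|in_arcs W v :|: in_arcs W' v|) :
  (\sum_(W <- Ws) xW x W <=
     (\sum_(W <- Ws) wlen W)%:R - (size Ws)%:R + 1)%R.
Proof.
have hx0 : forall u v : V, u != v -> (0 <= x u v)%R by move=> u v /hx01[].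
have hx1 : forall u v : V, u != v -> (x u v <= 1)%R by move=> u v /hx01[].
set n := size Ws.
have hn : (0 < n)%N by rewrite lt0n size_eq0.
pose W := fun i : 'I_n => nth [::] Ws i.
have hWin : forall i : 'I_n, W i \in Ws by move=> i; apply: mem_nth.
have bigW : forall F : seq V -> R, (\sum_(W <- Ws) F W = \sum_(i < n) F (W i))%R.
  by move=> F; rewrite (big_nth [::]) big_mkord.
suff key : (n%:R - 1 <= \sum_(W <- Ws) ((wlen W)%:R - xW x W))%R.
  by rewrite sumrB -natr_sum in key; lra.
rewrite bigW.
apply: le_trans (ler_sum _ (fun i _ => @walk_def R V x hx1 _ (hwalk _ (hWin i)))).
rewrite exchange_big /=.
pose S := fun v (i : 'I_n) => in_arcs (W i) v.
have hS : forall v i a, a \in S v i -> (a.2 == v) && (a.1 != v).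
  move=> v i a; rewrite /S /in_arcs inE => /andP[ha /eqP e].
  have := @walk_arcs V _ (hwalk _ (hWin i)) _ ha; rewrite e => ->; by rewrite eqxx.
apply: le_trans (ler_sum _ (fun v _ =>
  @node_bound R V x hx0 v (hxin v) n (S v) (hS v))).
rewrite -natr_sum.
have le : (n <= \sum_v #|~: @C V v n (S v)| + 1)%N.
  apply: (@cover_bound V n (fun v => @C V v n (S v)) hn) => i j nij.
  have nW : W i != W j by rewrite /W nth_uniq.
  have [v hv] := hsep _ _ (hWin i) (hWin j) nW.
  exists v; rewrite -negb_and; apply/negP => /andP[].
  rewrite /C !inE => si sj.
  have : (#|S v i :|: S v j| <= 1)%N.
    have su : S v i :|: S v j \subset [set astar V v n (S v)] by rewrite subUset si sj.
    by have := subset_leq_card su; rewrite cards1.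
  rewrite /S; lia.
rewrite -(ler_nat R) natrD in le; lra.
Qed.
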